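(* In $Y_R(\mathfrak{so}_3)$, writing $e_{-1,0}(u)=\sum_{r\ge1}e^{(r)}_{-1,0}u^{-r}$, $$[e^{(1)}_{-1,0},e_{-1,0}(u)]=e_{-1,0}(u)^2-e_{-1,0}(u+\tfrac12)e_{-1,0}(u)-e_{-1,1}(u+\tfrac12).$$
   Context: Let $e_{ij}$ ($i,j\in\{-1,0,1\}$) be the matrix units of $\mathrm{End}\,\mathbb{C}^3$, with rows and columns indexed by $-1,0,1$. Let $P=\sum_{i,j}e_{ij}\otimes e_{ji}$, $Q=\sum_{i,j}e_{ij}\otimes e_{-i,-j}$ and $R(u)=1-\frac{P}{u}+\frac{Q}{u-\frac12}$. Let $t$ be the transposition on $\mathrm{End}\,\mathbb{C}^3$ given by $(e_{ij})^t=e_{-j,-i}$. The algebra $Y_R(\mathfrak{so}_3)$ is the unital associative algebra over $\mathbb{C}$ generated by elements $t_{ij}^{(r)}$, $r\ge 1$, $i,j\in\{-1,0,1\}$; put $t_{ij}(u)=\delta_{ij}+\sum_{r\ge1}t^{(r)}_{ij}u^{-r}$, $T(u)=\sum_{i,j}t_{ij}(u)\otimes e_{ij}$, $T^t(u)=\sum_{i,j}t_{ij}(u)\otimes e_{-j,-i}$, $T_1(u)=\sum t_{ij}(u)\otimes e_{ij}\otimes 1$, $T_2(v)=\sum t_{ij}(v)\otimes 1\otimes e_{ij}$. The defining relations are $R(u-v)T_1(u)T_2(v)=T_2(v)T_1(u)R(u-v)$ and $T(u)T^t(u+\frac12)=T^t(u+\frac12)T(u)=1$. The Gauss generators are the unique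 series $k_i(u)\in 1+u^{-1}Y_R(\mathfrak{so}_3)[[u^{-1}]]$ ($i=-1,0,1$) and $e_{ij}(u),f_{ji}(u)\in u^{-1}Y_R(\mathfrak{so}_3)[[u^{-1}]]$ ($-1\le i<j\le1$) such that $T(u)=F(u)K(u)E(u)$, where $F(u)$ is the lower unitriangular matrix with below-diagonal entries $F_{0,-1}=f_{0,-1}(u)$, $F_{1,-1}=f_{1,-1}(u)$, $F_{1,0}=f_{1,0}(u)$, $K(u)=\mathrm{diag}(k_{-1}(u),k_0(u),k_1(u))$, and $E(u)$ is the upper unitriangular matrix with above-diagonal entries $E_{-1,0}=e_{-1,0}(u)$, $E_{-1,1}=e_{-1,1}(u)$, $E_{0,1}=e_{01}(u)$ (rows/columns indexed by $-1,0,1$). *)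

(* Defs.v *)
From HB Require Import structures.
From mathcomp Require Import all_boot all_order all_algebra.
Set Implicit Arguments. Unset Strict Implicit. Unset Printing Implicit Defensive.
Import GRing.Theory.
Local Open Scope ring_scope.

Definition idx3 : seq int := [:: -1; 0; 1].

Section YangianDefs.
Variables (F : fieldType) (A : lalgType F).

(* A formal series  sum_{n >= 0} f n u^{-n}  with coefficients in A. *)
Definition ser := nat -> A.

Definition ser_delta (b : bool) : ser := fun n => if b && (n == 0%N) then 1 else 0.
Definition ser_one : ser := ser_delta true.
Definition ser_zero : ser := fun _ => 0.

Definition ser_mul (f g : ser) : ser :=
  fun n => \sum_(k < n.+1) f k * g (n - k)%N.

(* Substitution u |-> u + c :  (u+c)^{-r} = sum_m (-1)^m C(r+m-1,m) c^m u^{-r-m}. *)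
Definition ser_shift (c : F) (f : ser) : ser :=
  fun n => \sum_(r < n.+1) ((- c) ^+ (n - r) * ('C(n.-1, n - r))%:R) *: f r.

(* t_ij(u) = delta_ij + sum_{r>=1} t_ij^(r) u^{-r}, from t i j r = t_ij^(r)
   (the value t i j 0 is irrelevant). *)
Definition tser (t : int -> int -> nat -> A) (i j : int) : ser :=
  fun n => if n == 0%N then (i == j)%:R else t i j n.

(* Two-variable expressions in A[u,v][[u^{-1},v^{-1}]]:
   f a b = coefficient of u^a v^b. *)
Definition ser2 := int -> int -> A.

(* coefficient of u^a in t_ij(u) *)
Definition tco (t : int -> int -> nat -> A) (i j : int) (a : int) : A :=
  match a with
  | Posz 0 => (i == j)%:R
  | Posz _ => 0
  | Negz m => t i j m.+1
  end.

(* multiplication by (u - v) *)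
Definition mul_umv (f : ser2) : ser2 := fun a b => f (a - 1) b - f a (b - 1).
(* multiplication by (u - v - 1/2) *)
Definition mul_umvh (f : ser2) : ser2 :=
  fun a b => mul_umv f a b - (2%:R^-1 : F) *: f a b.

(* The RTT relation R(u-v)T_1(u)T_2(v) = T_2(v)T_1(u)R(u-v), multiplied by
   (u-v)(u-v-1/2), written entrywise: entry ((i,k),(j,l)) of
   End(C^3 (x) C^3), i.e. coefficient of e_ij (x) e_kl. *)
Definition RTT_rel (t : int -> int -> nat -> A) : Prop :=
  forall i j k l, i \in idx3 -> j \in idx3 -> k \in idx3 -> l \in idx3 ->
  let X  : ser2 := fun a b => tco t i j a * tco t k l b in
  let PX : ser2 := fun a b => tco t k j a * tco t i l b in
  let QX : ser2 := fun a b =>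
    (k == - i)%:R * \sum_(c <- idx3) tco t c j a * tco t (- c) l b in
  let Y  : ser2 := fun a b => tco t k l b * tco t i j a in
  let YP : ser2 := fun a b => tco t k j b * tco t i l a in
  let YQ : ser2 := fun a b =>
    (l == - j)%:R * \sum_(c <- idx3) tco t k (- c) b * tco t i c a in
  forall a b : int,
    mul_umv (mul_umvh X) a b - mul_umvh PX a b + mul_umv QX a b
  = mul_umv (mul_umvh Y) a b - mul_umvh YP a b + mul_umv YQ a b.

(* T(u) T^t(u+1/2) = T^t(u+1/2) T(u) = 1, where (T^t)_{ab} = t_{-b,-a}. *)
Definition unitary_rel (t : int -> int -> nat -> A) : Prop :=
  forall i j, i \in idx3 -> j \in idx3 -> forall n : nat,
    (\sum_(a <- idx3)
       ser_mul (tser t i a) (ser_shift (2%:R^-1) (tser t (- j) (- a))) n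
     = ser_delta (i == j) n)
 /\ (\sum_(a <- idx3)
       ser_mul (ser_shift (2%:R^-1) (tser t (- a) (- i))) (tser t a j) n
     = ser_delta (i == j) n).

(* Gauss decomposition T(u) = F(u) K(u) E(u):
   k a = k_a(u), e a j = e_aj(u) (a < j), f i a = f_ia(u) (a < i). *)
Definition Fmat (f : int -> int -> nat -> A) (i a : int) : ser :=
  if i == a then ser_one else if a < i then f i a else ser_zero.
Definition Emat (e : int -> int -> nat -> A) (a j : int) : ser :=
  if a == j then ser_one else if a < j then e a j else ser_zero.

Definition gauss_decomp (t : int -> int -> nat -> A) (k : int -> nat -> A)
  (e f : int -> int -> nat -> A) : Prop :=
  (forall a, a \in idx3 -> k a 0%N = 1)
  /\ (forall a j, a \in idx3 -> j \in idx3 -> a < j -> e a j 0%N = 0)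
  /\ (forall i a, i \in idx3 -> a \in idx3 -> a < i -> f i a 0%N = 0)
  /\ (forall i j, i \in idx3 -> j \in idx3 -> forall n : nat,
        tser t i j n
        = \sum_(a <- idx3) ser_mul (ser_mul (Fmat f i a) (k a)) (Emat e a j) n).

End YangianDefs.

(* Main.v *)
Require Import Defs.
From HB Require Import structures.
From mathcomp Require Import all_boot all_order all_algebra.
From Stdlib Require Import FunctionalExtensionality.
From mathcomp Require Import ring lra zify.
Import GRing.Theory.
Local Open Scope ring_scope.
Unset Printing Implicit Defensive.

Section Ser.
Context {F : fieldType} {A : lalgType F}.

Definition cs (a : F) := forall x y : A, x * (a *: y) = a *: (x * y).

Lemma cs_nat n : cs n%:R.
Proof. by move=> x y; rewrite !scaler_nat mulrnAr. Qed.

Lemma cs_mul a b : cs a -> cs b -> cs (a * b).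
Proof. by move=> ha hb x y; rewrite -!scalerA ha hb. Qed.

Lemma cs_opp a : cs a -> cs (- a).
Proof. by move=> ha x y; rewrite !scaleNr mulrN ha. Qed.

Lemma cs_exp a m : cs a -> cs (a ^+ m).
Proof.
move=> ha; elim: m => [|m IH]; first by move=> x y; rewrite expr0 !scale1r.
by rewrite exprS; apply: cs_mul.
Qed.

Lemma cs_invn d : d%:R != 0 :> F -> cs (d%:R^-1).
Proof.
move=> hd x y.
have inj : forall z w : A, d%:R *: z = d%:R *: w -> z = w.
  by move=> z w /(congr1 (fun v => d%:R^-1 *: v)); rewrite !scalerA mulVf // !scale1r.
apply: inj; rewrite scalerA divff // scale1r -(cs_nat d) scalerA divff //.
by rewrite scale1r.
Qed.

Definition zs (q : ser A) : ser A := fun i => if i is i'.+1 then q i' else 0.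

Lemma ser_mulE (f g : ser A) n : ser_mul f g n = \sum_(i < n.+1) f i * g (n - i)%N.
Proof. by []. Qed.

(* associativity via polynomials *)
Definition tp (N : nat) (f : ser A) : {poly A} := \poly_(i < N) f i.

Lemma tp_coef N (f : ser A) i : (i < N)%N -> (tp N f)`_i = f i.
Proof. by move=> h; rewrite coef_poly h. Qed.

Lemma ser_mul_tp N (f g : ser A) n : (n < N)%N -> ser_mul f g n = (tp N f * tp N g)`_n.
Proof.
move=> hn; rewrite coefM /ser_mul; apply: eq_bigr => i _.
have hi : (i < N)%N by apply: leq_ltn_trans hn; rewrite -ltnS.
have hj : (n - i < N)%N by apply: leq_ltn_trans hn; rewrite leq_subr.
by rewrite !tp_coef.
Qed.

Lemma coefM_eql (p p' q : {poly A}) n :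
  (forall j, (j <= n)%N -> p`_j = p'`_j) -> (p * q)`_n = (p' * q)`_n.
Proof. by move=> h; rewrite !coefM; apply: eq_bigr => i _; rewrite h // -ltnS. Qed.

Lemma coefM_eqr (p q q' : {poly A}) n :
  (forall j, (j <= n)%N -> q`_j = q'`_j) -> (p * q)`_n = (p * q')`_n.
Proof. by move=> h; rewrite !coefM; apply: eq_bigr => i _; rewrite h // leq_subr. Qed.

Lemma ser_mulA (f g h : ser A) : ser_mul (ser_mul f g) h = ser_mul f (ser_mul g h).
Proof.
apply: functional_extensionality => n.
rewrite (@ser_mul_tp n.+1) // (@ser_mul_tp n.+1 f) //.
rewrite (@coefM_eql _ (tp n.+1 f * tp n.+1 g)); last first.
  by move=> j hj; rewrite tp_coef ?ltnS // (@ser_mul_tp n.+1) // ltnS.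
rewrite [RHS](@coefM_eqr _ _ (tp n.+1 g * tp n.+1 h)); last first.
  by move=> j hj; rewrite tp_coef ?ltnS // (@ser_mul_tp n.+1) // ltnS.
by rewrite mulrA.
Qed.


Lemma shift_zs0 c (q : ser A) : ser_shift c (zs q) 0 = 0.
Proof. by rewrite /ser_shift big_ord1 /= scaler0. Qed.

Lemma shift_zs c (q : ser A) n :
  ser_shift c (zs q) n.+1 + c *: ser_shift c (zs q) n = ser_shift c q n.
Proof.
rewrite /ser_shift big_ord_recl /= scaler0 add0r.
case: n => [|n].
  by rewrite !big_ord1 /= scaler0 scaler0 addr0.
rewrite [X in _ + c *: X]big_ord_recl /= scaler0 add0r.
rewrite big_ord_recr /= [RHS]big_ord_recr /= !subnn !bin0 addrAC.
congr (_ + _); rewrite scaler_sumr -big_split /=; apply: eq_bigr => i _.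
rewrite !subSS scalerA -scalerDl; congr (_ *: _).
have hi : (i <= n)%N by rewrite -ltnS.
rewrite (subSn hi) binS exprS natrD mulrDr.
ring.
Qed.


Lemma shift_add c (f g : ser A) n :
  ser_shift c (fun s => f s + g s) n = ser_shift c f n + ser_shift c g n.
Proof. by rewrite /ser_shift -big_split; apply: eq_bigr => i _; rewrite scalerDr. Qed.

Lemma shift_scal c a (f : ser A) n :
  ser_shift c (fun s => a *: f s) n = a *: ser_shift c f n.
Proof.
by rewrite /ser_shift scaler_sumr; apply: eq_bigr => i _; rewrite !scalerA mulrC.
Qed.

Lemma shift_opp c (f : ser A) n :
  ser_shift c (fun s => - f s) n = - ser_shift c f n.
Proof. by rewrite /ser_shift -sumrN; apply: eq_bigr => i _; rewrite scalerN. Qed.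

Lemma shift_rmul c (f : ser A) x n :
  ser_shift c (fun s => f s * x) n = ser_shift c f n * x.
Proof. by rewrite /ser_shift mulr_suml; apply: eq_bigr => i _; rewrite scalerAl. Qed.

Lemma cs_coef c m b : cs c -> cs ((- c) ^+ m * b%:R).
Proof. by move=> hc; apply: cs_mul; [apply: cs_exp; apply: cs_opp | apply: cs_nat]. Qed.

Lemma shift_lmul c (f : ser A) x n : cs c ->
  ser_shift c (fun s => x * f s) n = x * ser_shift c f n.
Proof.
move=> hc; rewrite /ser_shift mulr_sumr; apply: eq_bigr => i _.
by rewrite (cs_coef _ _ _ hc).
Qed.

Lemma shift0 c (f : ser A) : ser_shift c f 0 = f 0.
Proof. by rewrite /ser_shift big_ord1 /= expr0 mul1r scale1r. Qed.

Lemma shift_ext c (f g : ser A) n : (forall m, f m = g m) -> ser_shift c f n = ser_shift c g n.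
Proof. by move=> h; rewrite /ser_shift; apply: eq_bigr => i _; rewrite h. Qed.

Lemma ser_mul_ext (f f' g g' : ser A) n : (forall m, f m = f' m) -> (forall m, g m = g' m) ->
  ser_mul f g n = ser_mul f' g' n.
Proof. by move=> h1 h2; rewrite /ser_mul; apply: eq_bigr => i _; rewrite h1 h2. Qed.

Lemma ser_mul_decomp (f g : ser A) m :
  ser_mul f g m = f 0%N * g m + zs (ser_mul (fun i => f i.+1) g) m.
Proof.
rewrite /ser_mul big_ord_recl /= subn0; case: m => [|m] /=; first by rewrite big_ord0 addr0.
by congr (_ + _); apply: eq_bigr => i _; rewrite subSS.
Qed.

Lemma zs_mul (f g : ser A) m : zs (ser_mul f g) m = ser_mul (zs f) g m.
Proof.
case: m => [|m]; first by rewrite /ser_mul big_ord1 /= mul0r.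
rewrite /ser_mul big_ord_recl /= mul0r add0r.
by apply: eq_bigr => i _; rewrite subSS.
Qed.

Definition cst (x : A) : ser A := fun m => if m is 0 then x else 0.

Lemma shift_cst c x n : ser_shift c (cst x) n = cst x n.
Proof.
rewrite /ser_shift big_ord_recl /= subn0; case: n => [|n] /=.
  by rewrite big_ord0 expr0 mul1r scale1r addr0.
rewrite bin_small // mulr0 scale0r add0r big1 // => i _; by rewrite scaler0.
Qed.

Lemma shift_zs' c (q : ser A) n :
  ser_shift c (zs q) n.+1 = ser_shift c q n - c *: ser_shift c (zs q) n.
Proof. by rewrite -(shift_zs c q n) addrK. Qed.

Lemma shiftM c (f g : ser A) n : cs c ->
  ser_shift c (ser_mul f g) n = ser_mul (ser_shift c f) (ser_shift c g) n.
Proof.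
move=> hc; elim: n f g => [|n IH] f g.
  by rewrite shift0 /ser_mul !big_ord1 /= !shift0.
have hf : forall m, f m = cst (f 0%N) m + zs (fun i => f i.+1) m.
  by case=> [|m] /=; rewrite ?addr0 ?add0r.
rewrite (shift_ext _ _ _ _ (ser_mul_decomp f g)) shift_add shift_lmul //.
rewrite (ser_mul_ext _ (fun m => ser_shift c (cst (f 0%N)) m + ser_shift c (zs (fun i => f i.+1)) m)
   _ (ser_shift c g)); last 2 first.
- by move=> m; rewrite (shift_ext _ _ _ _ hf) shift_add.
- by [].
rewrite /ser_mul; under eq_bigr => i _ do rewrite mulrDl. rewrite big_split /=; congr (_ + _).
  rewrite big_ord_recl /= shift_cst /= big1 ?addr0 //.
  by move=> i _; rewrite shift_cst /= mul0r.
rewrite shift_zs' big_ord_recl /= shift_zs0 mul0r add0r.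
under eq_bigr => i _ do rewrite subSS shift_zs' mulrBl -scalerAl.
rewrite sumrB -scaler_sumr.
congr (_ - c *: _).
  exact: (IH (fun i => f i.+1) g).
transitivity (ser_shift c (ser_mul (zs (fun i => f i.+1)) g) n).
  by apply: shift_ext => m; exact: (zs_mul (fun i => f i.+1) g m).
exact: IH.
Qed.


Definition sb (c : F) (G : nat -> nat -> A) (n : nat) : A :=
  \sum_(r < n.+1) ser_shift c (G r) (n - r)%N.

Definition sh (a b : nat) (G : nat -> nat -> A) : nat -> nat -> A :=
  fun r s => if (a <= r)%N && (b <= s)%N then G (r - a)%N (s - b)%N else 0.

Lemma sb_ext c (G H : nat -> nat -> A) n : (forall r s, G r s = H r s) -> sb c G n = sb c H n.
Proof. by move=> h; apply: eq_bigr => i _; apply: shift_ext. Qed.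

Lemma sb_add c (G H : nat -> nat -> A) n :
  sb c (fun r s => G r s + H r s) n = sb c G n + sb c H n.
Proof. by rewrite /sb -big_split; apply: eq_bigr => i _; rewrite shift_add. Qed.

Lemma sb_opp c (G : nat -> nat -> A) n : sb c (fun r s => - G r s) n = - sb c G n.
Proof. by rewrite /sb -sumrN; apply: eq_bigr => i _; rewrite shift_opp. Qed.

Lemma sb_sub c (G H : nat -> nat -> A) n :
  sb c (fun r s => G r s - H r s) n = sb c G n - sb c H n.
Proof. by rewrite sb_add sb_opp. Qed.

Lemma sb_scal c a (G : nat -> nat -> A) n : sb c (fun r s => a *: G r s) n = a *: sb c G n.
Proof. by rewrite /sb scaler_sumr; apply: eq_bigr => i _; rewrite shift_scal. Qed.

Lemma sb_lmul c x (G : nat -> nat -> A) n : cs c -> sb c (fun r s => x * G r s) n = x * sb c G n.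
Proof. by move=> hc; rewrite /sb mulr_sumr; apply: eq_bigr => i _; rewrite shift_lmul. Qed.

Lemma sb_sum c (I : Type) (l : seq I) (G : I -> nat -> nat -> A) n :
  sb c (fun r s => \sum_(i <- l) G i r s) n = \sum_(i <- l) sb c (G i) n.
Proof.
elim: l => [|x l IH].
  rewrite big_nil /sb big1 // => i _; rewrite /ser_shift big1 // => j _.
  by rewrite big_nil scaler0.
rewrite big_cons -IH -sb_add; apply: sb_ext => r s; by rewrite big_cons.
Qed.

Lemma sb_zero c (G : nat -> nat -> A) n : (forall r s, G r s = 0) -> sb c G n = 0.
Proof.
move=> h; rewrite /sb big1 // => i _; rewrite /ser_shift big1 // => j _.
by rewrite h scaler0.
Qed.

Lemma sb_Mz0 c a b (G : nat -> nat -> A) : sb c (sh a.+1 b G) 0 = 0.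
Proof. by rewrite /sb big_ord1 /= shift0 /sh. Qed.

Lemma sb_Mz c a b (G : nat -> nat -> A) n : sb c (sh a.+1 b G) n.+1 = sb c (sh a b G) n.
Proof.
rewrite /sb big_ord_recl /=.
rewrite [X in X + _](_ : _ = 0); last first.
  by rewrite /ser_shift big1 // => i _; rewrite /sh /= scaler0.
rewrite add0r; apply: eq_bigr => i _; rewrite subSS; apply: shift_ext => m.
by rewrite /sh /bump /= add1n ltnS subSS.
Qed.

Lemma sh_zs a b (G : nat -> nat -> A) r s : sh a b.+1 G r s = zs (sh a b G r) s.
Proof. by rewrite /sh /zs; case: s => [|s] //=; rewrite andbF. Qed.

Lemma sb_Mz'0 c b (G : nat -> nat -> A) : sb c (sh 0 b.+1 G) 0 = 0.
Proof. by rewrite /sb big_ord1 /= shift0 /sh andbF. Qed.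

Lemma sb_Mz' c b (G : nat -> nat -> A) n :
  sb c (sh 0 b.+1 G) n.+1 + c *: sb c (sh 0 b.+1 G) n = sb c (sh 0 b G) n.
Proof.
rewrite /sb big_ord_recr /= subnn.
rewrite [X in _ + X + _](_ : _ = 0); last first.
  by rewrite (shift_ext _ _ (zs (sh 0 b G n.+1))) ?shift_zs0 // => m; rewrite sh_zs.
rewrite addr0 scaler_sumr -big_split /=; apply: eq_bigr => i _.
have hi : (i <= n)%N by rewrite -ltnS.
rewrite (subSn hi).
rewrite (shift_ext _ _ (zs (sh 0 b G i))); last by move=> m; rewrite sh_zs.
rewrite [X in _ + c *: X](shift_ext _ _ (zs (sh 0 b G i))); last by move=> m; rewrite sh_zs.
by rewrite shift_zs.
Qed.

Lemma sb_XY c (p q : ser A) n : cs c ->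
  sb c (fun r s => p r * q s) n = ser_mul p (ser_shift c q) n.
Proof. by move=> hc; rewrite /sb /ser_mul; apply: eq_bigr => i _; rewrite shift_lmul. Qed.

Lemma sb_YX c (p q : ser A) n :
  sb c (fun r s => q s * p r) n = ser_mul (ser_shift c q) p n.
Proof.
rewrite /sb /ser_mul (reindex_inj rev_ord_inj) /=; apply: eq_bigr => i _.
rewrite shift_rmul subKn //; by rewrite -ltnS.
Qed.


Definition phi6 (x1 x2 x3 x4 x5 x6 : A) (a1 a2 a3 a4 a5 a6 : F) : A :=
  \sum_(i < 6) nth 0 [:: a1; a2; a3; a4; a5; a6] i *: nth 0 [:: x1; x2; x3; x4; x5; x6] i.

Lemma phi6_add x1 x2 x3 x4 x5 x6 a1 a2 a3 a4 a5 a6 b1 b2 b3 b4 b5 b6 :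
  phi6 x1 x2 x3 x4 x5 x6 a1 a2 a3 a4 a5 a6 + phi6 x1 x2 x3 x4 x5 x6 b1 b2 b3 b4 b5 b6 =
  phi6 x1 x2 x3 x4 x5 x6 (a1 + b1) (a2 + b2) (a3 + b3) (a4 + b4) (a5 + b5) (a6 + b6).
Proof.
rewrite /phi6 -big_split; apply: eq_bigr => -[i hi] _ /=.
by rewrite -scalerDl; case: i hi => [|[|[|[|[|[|i]]]]]].
Qed.

Lemma phi6_scal x1 x2 x3 x4 x5 x6 k a1 a2 a3 a4 a5 a6 :
  k *: phi6 x1 x2 x3 x4 x5 x6 a1 a2 a3 a4 a5 a6 =
  phi6 x1 x2 x3 x4 x5 x6 (k * a1) (k * a2) (k * a3) (k * a4) (k * a5) (k * a6).
Proof.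
rewrite /phi6 scaler_sumr; apply: eq_bigr => -[i hi] _ /=.
by rewrite scalerA; case: i hi => [|[|[|[|[|[|i]]]]]].
Qed.

Lemma phi6_opp x1 x2 x3 x4 x5 x6 a1 a2 a3 a4 a5 a6 :
  - phi6 x1 x2 x3 x4 x5 x6 a1 a2 a3 a4 a5 a6 =
  phi6 x1 x2 x3 x4 x5 x6 (- a1) (- a2) (- a3) (- a4) (- a5) (- a6).
Proof. by rewrite -scaleN1r phi6_scal !mulN1r. Qed.

Lemma phi6_e x1 x2 x3 x4 x5 x6 a1 a2 a3 a4 a5 a6 :
  phi6 x1 x2 x3 x4 x5 x6 a1 a2 a3 a4 a5 a6 =
  a1 *: x1 + a2 *: x2 + a3 *: x3 + a4 *: x4 + a5 *: x5 + a6 *: x6.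
Proof. by rewrite /phi6 !big_ord_recr big_ord0 /= add0r. Qed.

Lemma phi6_0 x1 x2 x3 x4 x5 x6 : 0 = phi6 x1 x2 x3 x4 x5 x6 0 0 0 0 0 0.
Proof. by rewrite phi6_e !scale0r !addr0. Qed.
Lemma phi6_1 x1 x2 x3 x4 x5 x6 : x1 = phi6 x1 x2 x3 x4 x5 x6 1 0 0 0 0 0.
Proof. by rewrite phi6_e !scale0r scale1r !addr0. Qed.
Lemma phi6_2 x1 x2 x3 x4 x5 x6 : x2 = phi6 x1 x2 x3 x4 x5 x6 0 1 0 0 0 0.
Proof. by rewrite phi6_e !scale0r scale1r !addr0 add0r. Qed.
Lemma phi6_3 x1 x2 x3 x4 x5 x6 : x3 = phi6 x1 x2 x3 x4 x5 x6 0 0 1 0 0 0.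
Proof. by rewrite phi6_e !scale0r scale1r !addr0 !add0r. Qed.
Lemma phi6_4 x1 x2 x3 x4 x5 x6 : x4 = phi6 x1 x2 x3 x4 x5 x6 0 0 0 1 0 0.
Proof. by rewrite phi6_e !scale0r scale1r !addr0 !add0r. Qed.
Lemma phi6_5 x1 x2 x3 x4 x5 x6 : x5 = phi6 x1 x2 x3 x4 x5 x6 0 0 0 0 1 0.
Proof. by rewrite phi6_e !scale0r scale1r !addr0 !add0r. Qed.
Lemma phi6_6 x1 x2 x3 x4 x5 x6 : x6 = phi6 x1 x2 x3 x4 x5 x6 0 0 0 0 0 1.
Proof. by rewrite phi6_e !scale0r scale1r !add0r. Qed.

End Ser.
Arguments cs {F} A a.

Ltac lin6 x1 x2 x3 x4 x5 x6 :=
  let p := fresh "p" in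
  let h1 := fresh "h" in let h2 := fresh "h" in let h3 := fresh "h" in
  let h4 := fresh "h" in let h5 := fresh "h" in let h6 := fresh "h" in
  let hadd := fresh "h" in let hsc := fresh "h" in let hop := fresh "h" in
  pose p := phi6 x1 x2 x3 x4 x5 x6;
  have h1 : x1 = p 1 0 0 0 0 0 := phi6_1 _ _ _ _ _ _;
  have h2 : x2 = p 0 1 0 0 0 0 := phi6_2 _ _ _ _ _ _;
  have h3 : x3 = p 0 0 1 0 0 0 := phi6_3 _ _ _ _ _ _;
  have h4 : x4 = p 0 0 0 1 0 0 := phi6_4 _ _ _ _ _ _;
  have h5 : x5 = p 0 0 0 0 1 0 := phi6_5 _ _ _ _ _ _;
  have h6 : x6 = p 0 0 0 0 0 1 := phi6_6 _ _ _ _ _ _;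
  have hadd : forall a1 a2 a3 a4 a5 a6 b1 b2 b3 b4 b5 b6,
    p a1 a2 a3 a4 a5 a6 + p b1 b2 b3 b4 b5 b6 =
    p (a1 + b1) (a2 + b2) (a3 + b3) (a4 + b4) (a5 + b5) (a6 + b6) := phi6_add _ _ _ _ _ _;
  have hsc : forall k a1 a2 a3 a4 a5 a6, k *: p a1 a2 a3 a4 a5 a6 =
    p (k * a1) (k * a2) (k * a3) (k * a4) (k * a5) (k * a6) := phi6_scal _ _ _ _ _ _;
  have hop : forall a1 a2 a3 a4 a5 a6, - p a1 a2 a3 a4 a5 a6 =
    p (- a1) (- a2) (- a3) (- a4) (- a5) (- a6) := phi6_opp _ _ _ _ _ _;
  rewrite ?(add0r, addr0, sub0r, subr0, scaler0);
  rewrite ?[x1]h1 ?[x2]h2 ?[x3]h3 ?[x4]h4 ?[x5]h5 ?[x6]h6;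
  rewrite !(hadd, hsc, hop);
  clear h1 h2 h3 h4 h5 h6 hadd hsc hop;
  congr (p _ _ _ _ _ _).

Section Ops.
Context {F : fieldType} {A : lalgType F}.
Local Notation h := (2%:R^-1 : F).

Definition OpX (G : nat -> nat -> A) : nat -> nat -> A := fun r s =>
  (sh 0 2 G r s - sh 1 1 G r s - h *: sh 1 2 G r s) - (sh 1 1 G r s - sh 2 0 G r s - h *: sh 2 1 G r s).
Definition OpP (G : nat -> nat -> A) : nat -> nat -> A := fun r s =>
  (sh 1 2 G r s - sh 2 1 G r s) - h *: sh 2 2 G r s.
Definition OpQ (G : nat -> nat -> A) : nat -> nat -> A := fun r s =>
  sh 1 2 G r s - sh 2 1 G r s.

Lemma sb_OpX c G n : sb c (fun r s => OpX G r s) n.+2 = (c * (c + h)) *: sb c (sh 0 2 G) n.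
Proof.
rewrite /OpX !sb_sub !sb_scal !sb_Mz.
rewrite -(sb_Mz' c 0 G n) -(sb_Mz' c 1 G n.+1) -(sb_Mz' c 1 G n).
lin6 (sb c (sh 0 2 G) n.+2) (sb c (sh 0 2 G) n.+1) (sb c (sh 0 2 G) n)
     (sb c (sh 0 2 G) n) (sb c (sh 0 2 G) n) (sb c (sh 0 2 G) n); ring.
Qed.

Lemma sb_OpP c G n : sb c (fun r s => OpP G r s) n.+2 = - (c + h) *: sb c (sh 0 2 G) n.
Proof.
rewrite /OpP !sb_sub !sb_scal !sb_Mz -(sb_Mz' c 1 G n).
lin6 (sb c (sh 0 2 G) n.+1) (sb c (sh 0 2 G) n) (sb c (sh 0 2 G) n)
     (sb c (sh 0 2 G) n) (sb c (sh 0 2 G) n) (sb c (sh 0 2 G) n); ring.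
Qed.

Lemma sb_OpQ c G n : sb c (fun r s => OpQ G r s) n.+2 = - c *: sb c (sh 0 2 G) n.
Proof.
rewrite /OpQ !sb_sub !sb_Mz -(sb_Mz' c 1 G n).
lin6 (sb c (sh 0 2 G) n.+1) (sb c (sh 0 2 G) n) (sb c (sh 0 2 G) n)
     (sb c (sh 0 2 G) n) (sb c (sh 0 2 G) n) (sb c (sh 0 2 G) n); ring.
Qed.

End Ops.

Section RTTnat.
Context {F : fieldType} {A : lalgType F}.
Variable t : int -> int -> nat -> A.

Lemma tco_neg i j r : tco t i j (- (r%:Z)) = tser t i j r.
Proof. by case: r. Qed.
End RTTnat.


Section RTTnat2.
Context {F : fieldType} {A : lalgType F}.
Variable t : int -> int -> nat -> A.

Lemma tco_sub i j (a r : nat) :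
  tco t i j (a%:Z - r%:Z) = if (a <= r)%N then tser t i j (r - a)%N else 0.
Proof.
case: leqP => h.
  rewrite -tco_neg; congr (tco t i j _).
  have e : ((r - a)%N : int) = r%:Z - a%:Z by rewrite subzn.
  rewrite e. ring.
have hm : (0 < a - r)%N by rewrite subn_gt0.
have ha : a = ((a - r) + r)%N by rewrite subnK // ltnW.
rewrite [in LHS]ha PoszD addrK; move: hm.
by case: (a - r)%N.
Qed.
Lemma tco_prodXY i j k l (a b r s : nat) :
  tco t i j (a%:Z - r%:Z) * tco t k l (b%:Z - s%:Z) =
  sh a b (fun r s => tser t i j r * tser t k l s) r s.
Proof. by rewrite /sh !tco_sub; case: (a <= r)%N; case: (b <= s)%N; rewrite ?mulr0 ?mul0r. Qed.

Lemma tco_prodYX i j k l (a b r s : nat) :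
  tco t k l (b%:Z - s%:Z) * tco t i j (a%:Z - r%:Z) =
  sh a b (fun r s => tser t k l s * tser t i j r) r s.
Proof. by rewrite /sh !tco_sub; case: (a <= r)%N; case: (b <= s)%N; rewrite ?mulr0 ?mul0r. Qed.

Lemma tco_prodQ (bb : bool) j l (a b r s : nat) :
  (bb%:R : A) * \sum_(c <- idx3) tco t c j (a%:Z - r%:Z) * tco t (- c) l (b%:Z - s%:Z) =
  sh a b (fun r s => bb%:R * \sum_(c <- idx3) tser t c j r * tser t (- c) l s) r s.
Proof.
rewrite /sh; case: ifP => h; last first.
  rewrite big1 ?mulr0 // => c _; rewrite !tco_sub.
  by move: h; case: (a <= r)%N; case: (b <= s)%N; rewrite ?mulr0 ?mul0r.
congr (_ * _); apply: eq_bigr => c _; rewrite !tco_sub.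
by case/andP: h => -> ->.
Qed.

Lemma tco_prodYQ (bb : bool) i k (a b r s : nat) :
  (bb%:R : A) * \sum_(c <- idx3) tco t k (- c) (b%:Z - s%:Z) * tco t i c (a%:Z - r%:Z) =
  sh a b (fun r s => bb%:R * \sum_(c <- idx3) tser t k (- c) s * tser t i c r) r s.
Proof.
rewrite /sh; case: ifP => h; last first.
  rewrite big1 ?mulr0 // => c _; rewrite !tco_sub.
  by move: h; case: (a <= r)%N; case: (b <= s)%N; rewrite ?mulr0 ?mul0r.
congr (_ * _); apply: eq_bigr => c _; rewrite !tco_sub.
by case/andP: h => -> ->.
Qed.


Lemma subz_norm (a x : nat) : (a.+1%:Z - x%:Z) - 1 = a%:Z - x%:Z.
Proof. rewrite -[a.+1]addn1 PoszD; ring. Qed.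

Definition Xt (i j k l : int) : nat -> nat -> A := fun r s => tser t i j r * tser t k l s.
Definition Pt (i j k l : int) : nat -> nat -> A := fun r s => tser t k j r * tser t i l s.
Definition Qt (i j k l : int) : nat -> nat -> A := fun r s =>
  (k == - i)%:R * \sum_(c <- idx3) tser t c j r * tser t (- c) l s.
Definition Yt (i j k l : int) : nat -> nat -> A := fun r s => tser t k l s * tser t i j r.
Definition YPt (i j k l : int) : nat -> nat -> A := fun r s => tser t k j s * tser t i l r.
Definition YQt (i j k l : int) : nat -> nat -> A := fun r s =>
  (l == - j)%:R * \sum_(c <- idx3) tser t k (- c) s * tser t i c r.

Lemma rel_nat : RTT_rel t -> forall i j k l, i \in idx3 -> j \in idx3 -> k \in idx3 -> l \in idx3 ->
  forall r s : nat,
  OpX (Xt i j k l) r s - OpP (Pt i j k l) r s + OpQ (Qt i j k l) r s =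
  OpX (Yt i j k l) r s - OpP (YPt i j k l) r s + OpQ (YQt i j k l) r s.
Proof.
move=> H i j k l hi hj hk hl r s.
move: (H i j k l hi hj hk hl (2%:Z - r%:Z) (2%:Z - s%:Z)).
rewrite /mul_umvh /mul_umv /= !subz_norm.
rewrite !tco_prodQ !tco_prodYQ.
rewrite ![in X in X = _ -> _]tco_prodXY ![in X in _ = X -> _]tco_prodYX.
by move=> E; exact: E.
Qed.

Local Notation h := (2%:R^-1 : F).

Lemma sh00 (G : nat -> nat -> A) r s : sh 0 0 G r s = G r s.
Proof. by rewrite /sh !subn0. Qed.

Lemma sh_lin a b (al be ga : F) (G1 G2 G3 G4 G5 G6 : nat -> nat -> A) r s :
  sh a b (fun r s => al *: (G1 r s - G2 r s) + be *: (G3 r s - G4 r s) - ga *: (G5 r s - G6 r s)) r s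
  = al *: (sh a b G1 r s - sh a b G2 r s) + be *: (sh a b G3 r s - sh a b G4 r s)
    - ga *: (sh a b G5 r s - sh a b G6 r s).
Proof. by rewrite /sh; case: ifP => _ //; rewrite !subr0 !scaler0 !addr0 subr0. Qed.

Lemma sb_comb3 c (G1 G2 G3 G4 G5 G6 : nat -> nat -> A) n :
  sb c (fun r s => (G1 r s - G2 r s + G3 r s) - (G4 r s - G5 r s + G6 r s)) n
  = (sb c G1 n - sb c G2 n + sb c G3 n) - (sb c G4 n - sb c G5 n + sb c G6 n).
Proof.
rewrite sb_sub; congr (_ - _); rewrite sb_add; congr (_ + _); exact: sb_sub.
Qed.

Lemma sb_comb6 c (al be ga : F) (G1 G2 G3 G4 G5 G6 : nat -> nat -> A) n :
  sb c (fun r s => al *: (G1 r s - G2 r s) + be *: (G3 r s - G4 r s) - ga *: (G5 r s - G6 r s)) n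
  = al *: (sb c G1 n - sb c G2 n) + be *: (sb c G3 n - sb c G4 n)
    - ga *: (sb c G5 n - sb c G6 n).
Proof.
rewrite sb_sub; congr (_ - _).
  rewrite sb_add; congr (_ + _).
    by rewrite sb_scal sb_sub.
  by rewrite sb_scal sb_sub.
by rewrite sb_scal sb_sub.
Qed.

Lemma sb_Xt c i j k l n : cs A c ->
  sb c (Xt i j k l) n = ser_mul (tser t i j) (ser_shift c (tser t k l)) n.
Proof. by move=> hc; rewrite /Xt sb_XY. Qed.
Lemma sb_Pt c i j k l n : cs A c ->
  sb c (Pt i j k l) n = ser_mul (tser t k j) (ser_shift c (tser t i l)) n.
Proof. by move=> hc; rewrite /Pt sb_XY. Qed.
Lemma sb_Yt c i j k l n :
  sb c (Yt i j k l) n = ser_mul (ser_shift c (tser t k l)) (tser t i j) n.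
Proof. by rewrite /Yt sb_YX. Qed.
Lemma sb_YPt c i j k l n :
  sb c (YPt i j k l) n = ser_mul (ser_shift c (tser t k j)) (tser t i l) n.
Proof. by rewrite /YPt sb_YX. Qed.
Lemma sb_Qt c i j k l n : cs A c ->
  sb c (Qt i j k l) n = (k == - i)%:R *
    \sum_(c0 <- idx3) ser_mul (tser t c0 j) (ser_shift c (tser t (- c0) l)) n.
Proof.
move=> hc; rewrite /Qt sb_lmul //; congr (_ * _).
rewrite (sb_sum c _ idx3 (fun c0 r s => tser t c0 j r * tser t (- c0) l s)).
by apply: eq_bigr => c0 _; rewrite sb_XY.
Qed.
Lemma sb_YQt c i j k l n : cs A c ->
  sb c (YQt i j k l) n = (l == - j)%:R *
    \sum_(c0 <- idx3) ser_mul (ser_shift c (tser t k (- c0))) (tser t i c0) n.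
Proof.
move=> hc; rewrite /YQt sb_lmul //; congr (_ * _).
rewrite (sb_sum c _ idx3 (fun c0 r s => tser t k (- c0) s * tser t i c0 r)).
by apply: eq_bigr => c0 _; rewrite sb_YX.
Qed.

Lemma spec_rel (c : F) : cs A c -> RTT_rel t ->
  forall i j k l, i \in idx3 -> j \in idx3 -> k \in idx3 -> l \in idx3 -> forall n : nat,
  (c * (c + h)) *: (ser_mul (tser t i j) (ser_shift c (tser t k l)) n
                    - ser_mul (ser_shift c (tser t k l)) (tser t i j) n)
  + (c + h) *: (ser_mul (tser t k j) (ser_shift c (tser t i l)) n
                - ser_mul (ser_shift c (tser t k j)) (tser t i l) n)
  - c *: ((k == - i)%:R * \sum_(c0 <- idx3) ser_mul (tser t c0 j) (ser_shift c (tser t (- c0) l)) n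
          - (l == - j)%:R * \sum_(c0 <- idx3) ser_mul (ser_shift c (tser t k (- c0))) (tser t i c0) n)
  = 0.
Proof.
move=> hc H i j k l hi hj hk hl.
pose L := fun r s => (c * (c + h)) *: (Xt i j k l r s - Yt i j k l r s)
  + (c + h) *: (Pt i j k l r s - YPt i j k l r s) - c *: (Qt i j k l r s - YQt i j k l r s).
have W2 : forall m, sb c (sh 0 2 L) m = 0.
  move=> m.
  have E0 : sb c (fun r s => (OpX (Xt i j k l) r s - OpP (Pt i j k l) r s + OpQ (Qt i j k l) r s)
     - (OpX (Yt i j k l) r s - OpP (YPt i j k l) r s + OpQ (YQt i j k l) r s)) m.+2 = 0.
    by apply: sb_zero => r s; rewrite (rel_nat H i j k l hi hj hk hl) subrr.
  move: E0; rewrite (sb_comb3 c (fun r s => OpX (Xt i j k l) r s) (fun r s => OpP (Pt i j k l) r s)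
     (fun r s => OpQ (Qt i j k l) r s) (fun r s => OpX (Yt i j k l) r s)
     (fun r s => OpP (YPt i j k l) r s) (fun r s => OpQ (YQt i j k l) r s)).
  rewrite !sb_OpX !sb_OpP !sb_OpQ.
  rewrite (sb_ext _ _ _ _ (sh_lin 0 2 _ _ _ _ _ _ _ _ _)).
  rewrite (sb_comb6 c _ _ _ (sh 0 2 (Xt i j k l)) (sh 0 2 (Yt i j k l)) (sh 0 2 (Pt i j k l))
     (sh 0 2 (YPt i j k l)) (sh 0 2 (Qt i j k l)) (sh 0 2 (YQt i j k l))).
  move=> E0; rewrite -[RHS]E0.
  lin6 (sb c (sh 0 2 (Xt i j k l)) m) (sb c (sh 0 2 (Yt i j k l)) m)
       (sb c (sh 0 2 (Pt i j k l)) m) (sb c (sh 0 2 (YPt i j k l)) m)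
       (sb c (sh 0 2 (Qt i j k l)) m) (sb c (sh 0 2 (YQt i j k l)) m); ring.
have W1 : forall m, sb c (sh 0 1 L) m = 0.
  by move=> m; rewrite -sb_Mz' !W2 scaler0 addr0.
have W0 : forall m, sb c L m = 0.
  by move=> m; rewrite -(sb_ext _ _ _ _ (sh00 L)) -sb_Mz' !W1 scaler0 addr0.
move=> n; rewrite -[RHS](W0 n) /L.
rewrite (sb_comb6 c _ _ _ (Xt i j k l) (Yt i j k l) (Pt i j k l) (YPt i j k l) (Qt i j k l) (YQt i j k l)).
by rewrite sb_Xt // sb_Yt sb_Pt // sb_YPt sb_Qt // sb_YQt.
Qed.
End RTTnat2.


Section SerAlg.
Context {F : fieldType} {A : lalgType F}.
Implicit Types (f g p q : ser A).

Lemma ser_mul1l f n : ser_mul (ser_one A) f n = f n.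
Proof.
rewrite /ser_mul big_ord_recl /ser_one /ser_delta /= subn0 mul1r big1 ?addr0 // => i _.
by rewrite mul0r.
Qed.

Lemma ser_mul1r f n : ser_mul f (ser_one A) n = f n.
Proof.
rewrite /ser_mul big_ord_recr /ser_one /ser_delta /= subnn mulr1 big1 ?add0r // => i _.
by rewrite /= subn_eq0 leqNgt ltn_ord mulr0.
Qed.

Lemma ser_mul0l f n : ser_mul (ser_zero A) f n = 0.
Proof. by rewrite /ser_mul big1 // => i _; rewrite mul0r. Qed.

Lemma ser_mulDl f f' g n :
  ser_mul (fun m => f m + f' m) g n = ser_mul f g n + ser_mul f' g n.
Proof. by rewrite /ser_mul -big_split; apply: eq_bigr => i _; rewrite mulrDl. Qed.

Lemma ser_mulDr f g g' n :
  ser_mul f (fun m => g m + g' m) n = ser_mul f g n + ser_mul f g' n.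
Proof. by rewrite /ser_mul -big_split; apply: eq_bigr => i _; rewrite mulrDr. Qed.

Lemma ser_mulNl f g n : ser_mul (fun m => - f m) g n = - ser_mul f g n.
Proof. by rewrite /ser_mul -sumrN; apply: eq_bigr => i _; rewrite mulNr. Qed.

Lemma ser_mulNr f g n : ser_mul f (fun m => - g m) n = - ser_mul f g n.
Proof. by rewrite /ser_mul -sumrN; apply: eq_bigr => i _; rewrite mulrN. Qed.

Lemma ser_mulZl a f g n : ser_mul (fun m => a *: f m) g n = a *: ser_mul f g n.
Proof. by rewrite /ser_mul scaler_sumr; apply: eq_bigr => i _; rewrite scalerAl. Qed.

Lemma ser_mulZr a f g n : cs A a -> ser_mul f (fun m => a *: g m) n = a *: ser_mul f g n.
Proof. by move=> ha; rewrite /ser_mul scaler_sumr; apply: eq_bigr => i _; rewrite ha. Qed.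

Lemma ser_mulBl f f' g n :
  ser_mul (fun m => f m - f' m) g n = ser_mul f g n - ser_mul f' g n.
Proof. by rewrite ser_mulDl ser_mulNl. Qed.

Lemma ser_mulBr f g g' n :
  ser_mul f (fun m => g m - g' m) n = ser_mul f g n - ser_mul f g' n.
Proof. by rewrite ser_mulDr ser_mulNr. Qed.

Lemma ser_mulA' f g p n : ser_mul (ser_mul f g) p n = ser_mul f (ser_mul g p) n.
Proof. by rewrite ser_mulA. Qed.

Lemma ser_cancel (K x : ser A) : K 0%N = 1 -> (forall n, ser_mul K x n = 0) -> forall n, x n = 0.
Proof.
move=> K0 H n; elim: n {-2}n (leqnn n) => [|n IH] m hm.
  by move: hm; rewrite leqn0 => /eqP ->; move: (H 0%N); rewrite /ser_mul big_ord1 K0 mul1r.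
move: (H m); rewrite /ser_mul big_ord_recl K0 mul1r subn0 big1 ?addr0 // => i _.
by rewrite IH ?mulr0 // lift0; lia.
Qed.

Lemma ser_cancel2 (K x y : ser A) : K 0%N = 1 ->
  (forall n, ser_mul K x n = ser_mul K y n) -> forall n, x n = y n.
Proof.
move=> K0 H n; apply/eqP; rewrite -subr_eq0; apply/eqP.
apply: (ser_cancel K (fun m => x m - y m) K0) => m.
by rewrite ser_mulBr H subrr.
Qed.

Lemma ser_mul_comm0 (f g : ser A) : ser_mul f g 0%N = f 0%N * g 0%N.
Proof. by rewrite /ser_mul big_ord1. Qed.

Lemma ser_der (t1 : A) f g n :
  t1 * ser_mul f g n - ser_mul f g n * t1 =
  ser_mul (fun m => t1 * f m - f m * t1) g n + ser_mul f (fun m => t1 * g m - g m * t1) n.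
Proof.
rewrite /ser_mul mulr_sumr mulr_suml -sumrB -big_split; apply: eq_bigr => i _ /=.
rewrite mulrBl mulrBr !mulrA; by rewrite addrA subrK.
Qed.

Lemma cs_m1 : cs A (-1).
Proof. by move=> x y; rewrite !scaleN1r mulrN. Qed.

End SerAlg.


Section Main.
Context {F : fieldType} {A : lalgType F}.
Hypothesis charF0 : [pchar F] =i pred0.
Variables (t : int -> int -> nat -> A) (k : int -> nat -> A) (e f : int -> int -> nat -> A).
Hypotheses (HR : RTT_rel t) (HG : gauss_decomp t k e f).

Local Notation K := (k (-1)).
Local Notation E := (e (-1) 0).
Local Notation Gs := (e (-1) 1).

Lemma in_m1 : (-1 : int) \in idx3. Proof. by []. Qed.
Lemma in_0 : (0 : int) \in idx3. Proof. by []. Qed.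
Lemma in_1 : (1 : int) \in idx3. Proof. by []. Qed.

Lemma gauss_row j : j \in idx3 -> forall n, tser t (-1) j n = ser_mul K (Emat e (-1) j) n.
Proof.
move=> hj n; case: HG => _ [_ [_ H4]]; rewrite H4 // /idx3 !big_cons big_nil.
rewrite /Fmat /=.
rewrite (ser_mul_ext _ K _ (Emat e (-1) j) n (ser_mul1l K) (fun _ => erefl)).
rewrite (ser_mul_ext _ (ser_zero A) _ (Emat e 0 j) n (ser_mul0l (k 0)) (fun _ => erefl)).
rewrite (ser_mul_ext _ (ser_zero A) _ (Emat e 1 j) n (ser_mul0l (k 1)) (fun _ => erefl)).
by rewrite !ser_mul0l !addr0.
Qed.

Lemma T11E n : tser t (-1) (-1) n = K n.
Proof. by rewrite gauss_row // ser_mul1r. Qed.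
Lemma T12E n : tser t (-1) 0 n = ser_mul K E n.
Proof. by rewrite gauss_row. Qed.
Lemma T13E n : tser t (-1) 1 n = ser_mul K Gs n.
Proof. by rewrite gauss_row. Qed.
Lemma K0 : K 0%N = 1.
Proof. by case: HG => [h _]; rewrite h. Qed.
Lemma E0 : E 0%N = 0.
Proof. by case: HG => _ [h _]; rewrite h. Qed.
Lemma Gs0 : Gs 0%N = 0.
Proof. by case: HG => _ [h _]; rewrite h. Qed.

Lemma t1E : t (-1) 0 1%N = E 1%N.
Proof.
have := T12E 1; rewrite /tser /= => ->.
by rewrite /ser_mul big_ord_recr big_ord1 /= K0 E0 mul1r mulr0 addr0 subn0.
Qed.



Lemma comm11 m : t (-1) 0 1%N * tser t (-1) (-1) m - tser t (-1) (-1) m * t (-1) 0 1%N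
  = - tser t (-1) 0 m.
Proof.
have := rel_nat t HR (-1) 0 (-1) (-1) in_m1 in_0 in_m1 in_m1 1 m.+2.
rewrite /OpX /OpP /OpQ /sh /Xt /Pt /Qt /Yt /YPt /YQt /= ?subSS ?subn0 ?subnn.
have t0 : forall i j, tser t i j 0 = (i == j)%:R by [].
have t1 : forall i j, tser t i j 1 = t i j 1 by [].
rewrite !t0 !t1 /= !(mul0r, mulr0, scaler0, subr0, sub0r, mulr1, addr0, oppr0) => ->.
by rewrite addrAC subrr add0r.
Qed.

Lemma comm12 m : t (-1) 0 1%N * tser t (-1) 0 m - tser t (-1) 0 m * t (-1) 0 1%N
  = tser t (-1) 1 m.
Proof.
have := rel_nat t HR (-1) 0 (-1) 0 in_m1 in_0 in_m1 in_0 1 m.+2.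
rewrite /OpX /OpP /OpQ /sh /Xt /Pt /Qt /Yt /YPt /YQt /= ?subSS ?subn0 ?subnn.
have t0 : forall i j, tser t i j 0 = (i == j)%:R by [].
have t1 : forall i j, tser t i j 1 = t i j 1 by [].
rewrite /idx3 !big_cons !big_nil !t0 !t1 /=.
have -> : (- (-1) : int) = 1 by [].
rewrite !(mul0r, mulr0, scaler0, subr0, sub0r, mulr1, mul1r, addr0, oppr0) => ->.
by rewrite addrAC subrr add0r.
Qed.

Lemma stepA n : E 1%N * E n - E n * E 1%N = ser_mul E E n + Gs n.
Proof.
rewrite -t1E.
set t1 := t (-1) 0 1%N.
have hK : forall m, t1 * K m - K m * t1 = - ser_mul K E m.
  by move=> m; rewrite -T11E -T12E comm11.
have h12 : forall m, ser_mul (fun m => t1 * K m - K m * t1) E m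
    + ser_mul K (fun m => t1 * E m - E m * t1) m = ser_mul K Gs m.
  by move=> m; rewrite -ser_der -T12E -T13E comm12.
apply: (ser_cancel2 K (fun m => t1 * E m - E m * t1) (fun m => ser_mul E E m + Gs m) K0) => m.
rewrite ser_mulDr -h12 (ser_mul_ext _ (fun m => - ser_mul K E m) _ E m hK (fun _ => erefl)).
by rewrite ser_mulNl ser_mulA' addNKr.
Qed.

Lemma nz2 : (2%:R : F) != 0.
Proof. by move/pcharf0P: charF0 => ->. Qed.
Lemma nz3 : (3%:R : F) != 0.
Proof. by move/pcharf0P: charF0 => ->. Qed.

Lemma lin_comb (a b : F) (x y z : A) : x = 0 -> y = 0 -> z = a *: x + b *: y -> z = 0.
Proof. by move=> -> -> ->; rewrite !scaler0 addr0. Qed.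

Local Notation T11 := (tser t (-1) (-1)).
Local Notation T12 := (tser t (-1) 0).
Local Notation T13 := (tser t (-1) 1).

Lemma relW n : ser_mul (ser_shift (-1) T12) T11 n = ser_mul (ser_shift (-1) T11) T12 n.
Proof.
have := spec_rel t (-1) cs_m1 HR (-1) 0 (-1) (-1) in_m1 in_0 in_m1 in_m1 n.
rewrite !mul0r subrr scaler0 subr0 => E.
apply/eqP; rewrite -subr_eq0; apply/eqP.
rewrite -[RHS](scaler0 _ 2%:R) -E.
lin6 (ser_mul T12 (ser_shift (-1) T11) n) (ser_mul (ser_shift (-1) T11) T12 n)
  (ser_mul (ser_shift (-1) T12) T11 n) (ser_mul (ser_shift (-1) T12) T11 n)
  (ser_mul (ser_shift (-1) T12) T11 n) (ser_mul (ser_shift (-1) T12) T11 n); field; exact: nz2.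
Qed.

Lemma relPS n : ser_mul (ser_shift (-1) T11) T13 n = - 2%:R^-1 *: ser_mul (ser_shift (-1) T12) T12 n.
Proof.
have := spec_rel t (-1) cs_m1 HR (-1) (-1) (-1) 1 in_m1 in_m1 in_m1 in_1 n.
have := spec_rel t (-1) cs_m1 HR (-1) 0 (-1) 0 in_m1 in_0 in_m1 in_0 n.
have e1 : (- (-1) : int) = 1 by [].
have e0 : (- 0 : int) = 0 by [].
rewrite /= /idx3 !big_cons !big_nil /= !e1 !e0 !mul0r !mul1r !addr0 => ES EP.
apply/eqP; rewrite -subr_eq0; apply/eqP.
apply: (lin_comb 1 (- (3%:R / 2%:R)) _ _ _ EP ES).
lin6 (ser_mul T11 (ser_shift (-1) T13) n) (ser_mul T12 (ser_shift (-1) T12) n)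
  (ser_mul (ser_shift (-1) T13) T11 n) (ser_mul (ser_shift (-1) T12) T12 n)
  (ser_mul (ser_shift (-1) T11) T13 n) (ser_mul (ser_shift (-1) T11) T13 n); field; exact: nz2.
Qed.

Lemma cs_h : cs A (2%:R^-1 : F).
Proof. exact: (cs_invn 2 nz2). Qed.
Lemma cs_mh : cs A (- 2%:R^-1 : F).
Proof. exact: (cs_opp _ cs_h). Qed.

Lemma T110 : T11 0%N = 1.
Proof. by []. Qed.

Lemma stepC n : Gs n = - 2%:R^-1 *: ser_mul E E n.
Proof.
have h1 : forall m, T13 m = - 2%:R^-1 *: ser_mul T12 E m.
  apply: (ser_cancel2 (ser_shift (-1) T11) T13 (fun m => - 2%:R^-1 *: ser_mul T12 E m)).
    by rewrite shift0.
  move=> m; rewrite relPS ser_mulZr; last exact: cs_mh.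
  congr (_ *: _).
  rewrite (ser_mul_ext _ (ser_shift (-1) T12) _ (ser_mul K E) m (fun _ => erefl) T12E).
  rewrite -ser_mulA' -[RHS]ser_mulA'; apply: ser_mul_ext => // x.
  by rewrite -relW; apply: ser_mul_ext => // y; rewrite T11E.
apply: (ser_cancel2 K Gs (fun m => - 2%:R^-1 *: ser_mul E E m) K0) => m.
rewrite ser_mulZr; last exact: cs_mh.
rewrite -T13E h1 -ser_mulA'; congr (_ *: _); apply: ser_mul_ext => // x.
exact: T12E.
Qed.

Local Notation h := (2%:R^-1 : F).
Local Notation sg := (ser_shift h).

Lemma R11 n : ser_mul T11 (sg T11) n = ser_mul (sg T11) T11 n.
Proof.
have := spec_rel t h cs_h HR (-1) (-1) (-1) (-1) in_m1 in_m1 in_m1 in_m1 n.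
rewrite /= !mul0r subrr scaler0 subr0 => E1.
apply/eqP; rewrite -subr_eq0; apply/eqP.
apply: (lin_comb (2%:R / 3%:R) 0 _ _ _ E1 E1).
lin6 (ser_mul T11 (sg T11) n) (ser_mul (sg T11) T11 n) (ser_mul (sg T11) T11 n)
  (ser_mul (sg T11) T11 n) (ser_mul (sg T11) T11 n) (ser_mul (sg T11) T11 n);
  field; rewrite ?nz2 ?nz3 ?mulf_neq0 ?nz2 ?nz3 //.
Qed.

Lemma R12 n : 3%:R *: ser_mul T11 (sg T12) n
  = ser_mul (sg T12) T11 n + 2%:R *: ser_mul (sg T11) T12 n.
Proof.
have := spec_rel t h cs_h HR (-1) (-1) (-1) 0 in_m1 in_m1 in_m1 in_0 n.
rewrite /= !mul0r subrr scaler0 subr0 => E1.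
apply/eqP; rewrite -subr_eq0; apply/eqP.
apply: (lin_comb 2%:R 0 _ _ _ E1 E1).
lin6 (ser_mul T11 (sg T12) n) (ser_mul (sg T12) T11 n) (ser_mul (sg T11) T12 n)
  (ser_mul (sg T11) T12 n) (ser_mul (sg T11) T12 n) (ser_mul (sg T11) T12 n);
  field; rewrite ?nz2 ?nz3 ?mulf_neq0 ?nz2 ?nz3 //.
Qed.

Lemma R13 n : 3%:R *: ser_mul T11 (sg T13) n
  = ser_mul (sg T11) T13 n - ser_mul (sg T12) T12 n.
Proof.
have e1 : (- (-1) : int) = 1 by [].
have e0 : (- 0 : int) = 0 by [].
have := spec_rel t h cs_h HR (-1) (-1) (-1) 1 in_m1 in_m1 in_m1 in_1 n.
rewrite /= /idx3 !big_cons !big_nil /= !e1 !e0 !mul0r !mul1r !addr0 => E1.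
apply/eqP; rewrite -subr_eq0; apply/eqP.
apply: (lin_comb 2%:R 0 _ _ _ E1 E1).
lin6 (ser_mul T11 (sg T13) n) (ser_mul (sg T13) T11 n) (ser_mul (sg T11) T13 n)
  (ser_mul (sg T12) T12 n) (ser_mul (sg T12) T12 n) (ser_mul (sg T12) T12 n);
  field; rewrite ?nz2 ?nz3 ?mulf_neq0 ?nz2 ?nz3 //.
Qed.

Lemma sT11 n : sg T11 n = sg K n.
Proof. by apply: shift_ext => m; rewrite T11E. Qed.
Lemma sT12 n : sg T12 n = ser_mul (sg K) (sg E) n.
Proof. by rewrite -shiftM; [apply: shift_ext => m; rewrite T12E | exact: cs_h]. Qed.
Lemma sT13 n : sg T13 n = ser_mul (sg K) (sg Gs) n.
Proof. by rewrite -shiftM; [apply: shift_ext => m; rewrite T13E | exact: cs_h]. Qed.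

Local Notation KK := (ser_mul K (sg K)).

Lemma R11' n : ser_mul (sg K) K n = KK n.
Proof.
rewrite (ser_mul_ext _ (sg T11) _ T11) => [|x|x]; last 2 first.
- by rewrite sT11.
- by rewrite T11E.
by rewrite -R11; apply: ser_mul_ext => x; rewrite ?T11E ?sT11.
Qed.

Lemma stepa n : ser_mul (ser_mul (sg K) (sg E)) K n
  = 3%:R *: ser_mul KK (sg E) n - 2%:R *: ser_mul KK E n.
Proof.
have := R12 n.
rewrite (ser_mul_ext T11 K (sg T12) (ser_mul (sg K) (sg E))) => [|x|x]; last 2 first.
- by rewrite T11E.
- by rewrite sT12.
rewrite (ser_mul_ext (sg T12) (ser_mul (sg K) (sg E)) T11 K) => [|x|x]; last 2 first.
- by rewrite sT12.
- by rewrite T11E.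
rewrite (ser_mul_ext (sg T11) (sg K) T12 (ser_mul K E)) => [|x|x]; last 2 first.
- by rewrite sT11.
- by rewrite T12E.
rewrite -ser_mulA' -[ser_mul (sg K) (ser_mul K E) n]ser_mulA'.
rewrite (ser_mul_ext (ser_mul (sg K) K) KK E E) => [|x|x]; last 2 first.
- by rewrite R11'.
- by [].
move=> ->; by rewrite addrK.
Qed.

Lemma stepb n : ser_mul (ser_mul (sg K) (sg E)) (ser_mul K E) n
  = 3%:R *: ser_mul KK (ser_mul (sg E) E) n - 2%:R *: ser_mul KK (ser_mul E E) n.
Proof.
rewrite -ser_mulA'.
rewrite (ser_mul_ext _ (fun m => 3%:R *: ser_mul KK (sg E) m - 2%:R *: ser_mul KK E m) E E n)
  => [|x|x]; last 2 first.
- exact: stepa.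
- by [].
by rewrite ser_mulBl !ser_mulZl !ser_mulA'.
Qed.

Lemma stepc n : 3%:R *: ser_mul KK (sg Gs) n
  = ser_mul KK Gs n - (3%:R *: ser_mul KK (ser_mul (sg E) E) n - 2%:R *: ser_mul KK (ser_mul E E) n).
Proof.
have := R13 n.
rewrite (ser_mul_ext T11 K (sg T13) (ser_mul (sg K) (sg Gs))) => [|x|x]; last 2 first.
- by rewrite T11E.
- by rewrite sT13.
rewrite (ser_mul_ext (sg T11) (sg K) T13 (ser_mul K Gs)) => [|x|x]; last 2 first.
- by rewrite sT11.
- by rewrite T13E.
rewrite (ser_mul_ext (sg T12) (ser_mul (sg K) (sg E)) T12 (ser_mul K E)) => [|x|x]; last 2 first.
- by rewrite sT12.
- by rewrite T12E.
rewrite stepb -ser_mulA' -[ser_mul (sg K) (ser_mul K Gs) n]ser_mulA'.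
rewrite (ser_mul_ext (ser_mul (sg K) K) KK Gs Gs) => [|x|x] //.
by rewrite R11'.
Qed.

Lemma stepD n : 3%:R *: sg Gs n - Gs n + 3%:R *: ser_mul (sg E) E n - 2%:R *: ser_mul E E n = 0.
Proof.
apply: (ser_cancel KK (fun m => 3%:R *: sg Gs m - Gs m + 3%:R *: ser_mul (sg E) E m
    - 2%:R *: ser_mul E E m)).
  by rewrite ser_mul_comm0 K0 shift0 K0 mulr1.
move=> m.
rewrite ser_mulBr ser_mulDr ser_mulBr !ser_mulZr; try exact: cs_nat.
have Hc : 3%:R *: ser_mul KK (sg Gs) m
  - (ser_mul KK Gs m - (3%:R *: ser_mul KK (ser_mul (sg E) E) m - 2%:R *: ser_mul KK (ser_mul E E) m)) = 0.
  by rewrite stepc subrr.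
apply: (lin_comb 1 0 _ _ _ Hc Hc).
lin6 (ser_mul KK (sg Gs) m) (ser_mul KK Gs m) (ser_mul KK (ser_mul (sg E) E) m)
  (ser_mul KK (ser_mul E E) m) (ser_mul KK (ser_mul E E) m) (ser_mul KK (ser_mul E E) m); ring.
Qed.

Lemma final n : E 1%N * E n - E n * E 1%N
    = ser_mul E E n - ser_mul (sg E) E n - sg Gs n.
Proof.
rewrite stepA.
have e1 : Gs n - (- 2%:R^-1 *: ser_mul E E n) = 0 by rewrite stepC subrr.
have e2 := stepD n.
apply/eqP; rewrite -subr_eq0; apply/eqP.
apply: (lin_comb (4%:R / 3%:R) (3%:R^-1) _ _ _ e1 e2).
lin6 (ser_mul E E n) (Gs n) (ser_mul (sg E) E n) (sg Gs n) (sg Gs n) (sg Gs n);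
  field; rewrite ?nz2 ?nz3 ?mulf_neq0 ?nz2 ?nz3 //.
Qed.
End Main.


Theorem lemma3p10 (F : fieldType) (A : lalgType F)
  (charF0 : [pchar F] =i pred0)
  (t : int -> int -> nat -> A) (k : int -> nat -> A)
  (e f : int -> int -> nat -> A) :
  RTT_rel t -> unitary_rel t -> gauss_decomp t k e f ->
  forall n : nat,
    e (-1) 0 1%N * e (-1) 0 n - e (-1) 0 n * e (-1) 0 1%N
    = ser_mul (e (-1) 0) (e (-1) 0) n
      - ser_mul (ser_shift (2%:R^-1) (e (-1) 0)) (e (-1) 0) n
      - ser_shift (2%:R^-1) (e (-1) 1) n.
Proof.
move=> HR _ HG n.
exact: (final charF0 _ _ _ _ HR HG n).
Qed.
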